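(* Let $\mathcal{A},\mathcal{B}$ be standard operator algebras on infinite-dimensional Banach spaces $\mathcal{X},\mathcal{Y}$, and let $\phi:\mathcal{A}\to\mathcal{B}$ be a bijection that is 2-quadratic preserving in both directions and satisfies $\phi(I)=I$. Then $\phi$ preserves orthogonality of idempotents in both directions: for idempotents $P,Q\in\mathcal{A}$, $PQ=QP=0$ if and only if $\phi(P)\phi(Q)=\phi(Q)\phi(P)=0$.
   Context: A standard operator algebra on $\mathcal{X}$ is a norm-closed subalgebra of $\mathcal{B}(\mathcal{X})$ containing the identity $I$ and all finite-rank operators. An operator $T$ is quadratic if there exist scalars $a,b$ with $(T-aI)(T-bI)=0$. $\phi_2((a_{ij})_{2\times 2})=(\phi(a_{ij}))_{2\times 2}$, and ''2-quadratic preserving in both directions'' means $T\in\mathcal{A}\otimes M_2$ is quadratic iff $\phi_2(T)$ is quadratic. Idempotents $P,Q$ are orthogonal if $PQ=QP=0$. *)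

(* Defs.v *)
From HB Require Import structures.
From mathcomp Require Import all_boot all_order all_algebra.
From mathcomp Require Import all_classical all_reals all_analysis.
From mathcomp Require Import complex.
Set Implicit Arguments. Unset Strict Implicit. Unset Printing Implicit Defensive.
Import Order.TTheory GRing.Theory Num.Theory.
Import numFieldNormedType.Exports.
Local Open Scope classical_set_scope.
Local Open Scope ring_scope.

Section Ops.
Variables (K : numFieldType) (X : normedModType K).

(* Operators are functions X -> X; B(X) = linear continuous maps. *)
Definition lin_op (T : X -> X) : Prop :=
  forall (a : K) (u v : X), T (a *: u + v) = a *: T u + T v.

Definition bounded_op (T : X -> X) : Prop := lin_op T /\ continuous T.

Definition in_span (s : seq X) (x : X) : Prop :=
  exists c : 'I_(size s) -> K, x = \sum_(i < size s) c i *: s`_i.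

Definition finite_rank (T : X -> X) : Prop :=
  exists s : seq X, forall x, in_span s (T x).

Definition infinite_dim : Prop :=
  forall s : seq X, exists x : X, ~ in_span s x.

(* A is closed in the operator-norm topology of B(X) *)
Definition norm_closed (A : set (X -> X)) : Prop :=
  forall T, bounded_op T ->
    (forall e : K, 0 < e -> exists2 S, A S &
        forall x, `|T x - S x| <= e * `|x|) ->
    A T.

Definition standard_operator_algebra (A : set (X -> X)) : Prop :=
  [/\ (forall T, A T -> bounded_op T),
      A id,
      (forall S T, A S -> A T -> A (fun x => S x + T x)),
      (forall (a : K) T, A T -> A (fun x => a *: T x)) &
      (forall S T, A S -> A T -> A (S \o T))] /\
  (forall T, bounded_op T -> finite_rank T -> A T) /\
  norm_closed A.

(* 2x2 operator matrices: elements of B(X) (x) M_2, acting on X (+) X *)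
Definition opmx2 := 'I_2 -> 'I_2 -> X -> X.

Definition shift2 (T : opmx2) (a : K) : opmx2 :=
  fun i j x => T i j x - (if i == j then a *: x else 0).

Definition mul2 (S T : opmx2) : opmx2 :=
  fun i j x => \sum_(k < 2) S i k (T k j x).

Definition quadratic2 (T : opmx2) : Prop :=
  exists a b : K, forall i j x, mul2 (shift2 T a) (shift2 T b) i j x = 0.

Definition in_alg2 (A : set (X -> X)) (T : opmx2) : Prop :=
  forall i j, A (T i j).

Definition idempotent_opr (P : X -> X) : Prop := P \o P = P.

End Ops.

Definition phi2 (K : numFieldType) (X Y : normedModType K)
  (phi : (X -> X) -> (Y -> Y)) (T : opmx2 X) : opmx2 Y :=
  fun i j => phi (T i j).

(* Main.v *)
Require Import Defs.
From HB Require Import structures.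
From mathcomp Require Import all_boot all_order all_algebra.
From mathcomp Require Import all_classical all_reals all_analysis.
From mathcomp Require Import complex.
From mathcomp Require Import ring lra.
Import Order.TTheory GRing.Theory Num.Theory.
Import numFieldNormedType.Exports.
Local Open Scope classical_set_scope.
Local Open Scope ring_scope.
Section Mat.
Variables (K : numFieldType) (V : normedModType K).

Definition mk2 (E F G H : V -> V) : opmx2 V :=
  fun i j => if i == ord0 then (if j == ord0 then E else F)
             else (if j == ord0 then G else H).

Lemma quad_mk2 E F G H :
  quadratic2 (mk2 E F G H) <-> exists a b : K, forall x,
   [/\ (E (E x - b*:x) - a*:(E x - b*:x)) + F (G x) = 0,
    (E (F x) - a *: F x) + F (H x - b*:x) = 0,
    G (E x - b*:x) + (H (G x) - a *: G x) = 0 &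
    G (F x) + (H (H x - b *: x) - a *: (H x - b*: x)) = 0].
Proof.
rewrite /quadratic2 /mul2 /shift2 /mk2.
split=> -[a [b h]]; exists a, b.
  move=> x; have h00 := h ord0 ord0 x; have h01 := h ord0 ord_max x.
  have h10 := h ord_max ord0 x; have h11 := h ord_max ord_max x.
  move: h00 h01 h10 h11; rewrite !big_ord_recl !big_ord0 /= !subr0 !addr0.
  done.
move=> i j x; have [h00 h01 h10 h11] := h x.
rewrite !big_ord_recl big_ord0 /= addr0.
case: i => [[|[|//]]] Hi; case: j => [[|[|//]]] Hj /=; rewrite ?subr0.
all: by [].
Qed.

Ltac vnorm x := rewrite -[x]scale1r;
  repeat first [rewrite (@scalerBr _ V) | rewrite (@scalerDr _ V) | rewrite (@scalerA _ V)
   | rewrite -(@scaleNr _ V) | rewrite -(@scalerDl _ V)].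

Ltac vfin := match goal with |- ?c *: _ = 0 => have -> : c = 0 by ring end; by rewrite scale0r.

Definition lin (T : V -> V) := forall (a : K) u v, T (a *: u + v) = a *: T u + T v.

Lemma lin0 T : lin T -> T 0 = 0.
Proof. by move=> h; have := h 1 0 0; rewrite !scale1r addr0 => e; apply: (addrI (T 0)); rewrite addr0 -e. Qed.

Lemma linZ T : lin T -> forall a u, T (a *: u) = a *: T u.
Proof. by move=> h a u; have := h a u 0; rewrite addr0 lin0 // addr0. Qed.

Lemma linB T : lin T -> forall u v, T (u - v) = T u - T v.
Proof. by move=> h u v; rewrite -[- v]scaleN1r (addrC u) h scaleN1r addrC. Qed.

Arguments lin0 {T}. Arguments linZ {T}. Arguments linB {T}.

Lemma scal_quad (l : K) :
  quadratic2 (mk2 (fun x => l *: x) id id (fun x => l *: x)).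
Proof.
apply/quad_mk2; exists (l + 1), (l - 1) => x /=; split.
- vnorm x; vfin.
- vnorm x; vfin.
- vnorm x; vfin.
- vnorm x; vfin.
Qed.

Lemma quad_scal X : quadratic2 (mk2 X id id X) -> exists l : K, forall x, X x = l *: x.
Proof.
move=> /quad_mk2 [a [b h]]; exists ((a + b) / 2) => x.
have [_ h01 _ _] := h x; move: h01 => /= h01.
have h2' : 2 *: X x = (a + b) *: x.
  apply/eqP; rewrite -subr_eq0; apply/eqP; rewrite -h01.
  by rewrite !scalerDl !scale1r opprD addrACA.
rewrite [(a + b) / 2]mulrC -scalerA -h2' scalerA mulVf ?scale1r //.
Qed.

Lemma orth_quad P Q : lin P -> lin Q -> (forall x, P (Q x) = 0) -> (forall x, Q (P x) = 0) ->
  quadratic2 (mk2 id P Q id).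
Proof.
move=> hP hQ hPQ hQP; apply/quad_mk2; exists 1, 1 => x /=.
split; rewrite !scale1r ?subrr ?hPQ ?hQP ?addr0 ?add0r => //. exact: lin0 hP. exact: lin0 hQ.
Qed.

Lemma quad_orth P Q : quadratic2 (mk2 id P Q id) ->
  exists t : K, forall x, P (Q x) = t *: x /\ Q (P x) = t *: x.
Proof.
move=> /quad_mk2 [a [b h]]; exists (- ((1 - b) - a * (1 - b))) => x.
have [h00 _ _ h11] := h x; move: h00 h11 => /=.
have e : x - b *: x - a *: (x - b *: x) = ((1 - b) - a * (1 - b)) *: x.
  by vnorm x; congr (_ *: _); ring.
rewrite e => h00 h11; split.
  by apply/eqP; rewrite scaleNr -subr_eq0 opprK addrC h00.
by apply/eqP; rewrite scaleNr -subr_eq0 opprK h11.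
Qed.

Lemma idem_quad X : (forall x, X (X x) = X x) -> quadratic2 (mk2 X X X X).
Proof.
move=> h; apply/quad_mk2; exists 2, 0 => x /=.
by split; rewrite !scale0r !subr0 !h; vnorm (X x); vfin.
Qed.

Lemma quad_sqc X : lin X -> quadratic2 (mk2 X X X X) ->
  exists c : K, forall x, X (X x) = c *: X x.
Proof.
move=> hX /quad_mk2 [a [b h]]; exists ((a + b) / 2) => x.
have [_ h01 _ _] := h x; move: h01 => /=.
rewrite (linB hX) (linZ hX) => h01.
have h2' : 2 *: X (X x) = (a + b) *: X x.
  apply/eqP; rewrite -subr_eq0; apply/eqP; rewrite -h01.
  by rewrite !scalerDl !scale1r opprD addrACA.
by rewrite [(a + b) / 2]mulrC -scalerA -h2' scalerA mulVf ?scale1r.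
Qed.

End Mat.
Arguments mk2 {K V}. Arguments quad_mk2 {K V}. Arguments lin {K V}. Arguments lin0 {K V T}. Arguments linZ {K V T}. Arguments linB {K V T}.
Arguments scal_quad {K V}. Arguments quad_scal {K V}. Arguments orth_quad {K V}. Arguments quad_orth {K V}. Arguments idem_quad {K V}. Arguments quad_sqc {K V}.
Local Open Scope complex_scope.

Section Pn.
Variables (R : realType) (X : normedModType (R[i])%C).

Lemma normcR (r : R) : `|r%:C| = `|r|%:C.
Proof. by rewrite normc_def /= expr0n /= addr0 sqrtr_sqr. Qed.

Lemma normci : `|'i : R[i]| = 1.
Proof. by rewrite normc_def /= expr0n /= expr1n add0r sqrtr1. Qed.

Definition pn (x : X) : R := complex.Re `|x|.

Lemma pnE x : `|x| = (pn x)%:C.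
Proof. by rewrite /pn RRe_real ?normr_real. Qed.

Lemma pn_ge0 x : 0 <= pn x.
Proof. by rewrite -ler0c -pnE normr_ge0. Qed.

Lemma pnD x y : pn (x + y) <= pn x + pn y.
Proof. have := ler_normD x y; rewrite !pnE lecE /= => /andP[_]. by []. Qed.

Lemma pnZ (r : R) x : pn (r%:C *: x) = `|r| * pn x.
Proof. by apply: complexI; rewrite -pnE normrZ normcR pnE rmorphM. Qed.

Lemma pnN x : pn (- x) = pn x.
Proof. by rewrite /pn normrN. Qed.

Lemma pni x : pn ('i *: x) = pn x.
Proof. by rewrite /pn normrZ normci mul1r. Qed.

Lemma pn0 : pn 0 = 0.
Proof. by rewrite /pn normr0. Qed.

Lemma pn_gt0 x : x != 0 -> 0 < pn x.
Proof. by move=> hx; rewrite -ltcR -pnE normr_gt0. Qed.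

End Pn.
Arguments pn {R X}. Arguments normcR {R}. Arguments normci {R}. Arguments pnE {R X}. Arguments pn_ge0 {R X}. Arguments pnD {R X}.
Arguments pnZ {R X}. Arguments pnN {R X}. Arguments pni {R X}. Arguments pn0 {R X}. Arguments pn_gt0 {R X}.

Section HBz.
Variables (R : realType) (X : normedModType (R[i])%C) (x0 : X).
Hypothesis hx0 : x0 != 0.
Local Notation pn := (@pn R X).

Definition lcl (G : set (X * R)) := forall (r : R) u v a b,
  G (u, a) -> G (v, b) -> G (r%:C *: u + v, r * a + b).
Definition dml (G : set (X * R)) := forall u a, G (u, a) -> a <= pn u.
Definition G0 : set (X * R) := [set z | exists r : R, z = (r%:C *: x0, r * pn x0)].
Definition good G := [/\ lcl G, dml G & G0 `<=` G].

Lemma goodL G : good G -> lcl G. Proof. by case. Qed.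
Lemma goodD G : good G -> dml G. Proof. by case. Qed.
Lemma good0 G : good G -> G0 `<=` G. Proof. by case. Qed.

Arguments goodL {G}. Arguments goodD {G}. Arguments good0 {G}.

Lemma good00 {G} : good G -> G (0, 0).
Proof.
case=> _ _ h; apply: h; exists 0.
by rewrite rmorph0 scale0r mul0r.
Qed.

Lemma goodZ {G} : good G -> forall (r : R) u a, G (u, a) -> G (r%:C *: u, r * a).
Proof.
move=> hG r u a h; have := (goodL hG) r u 0 a 0 h (good00 hG).
by rewrite !addr0.
Qed.

Lemma good_fun {G} : good G -> forall u a b, G (u, a) -> G (u, b) -> a = b.
Proof.
move=> hG u a b ha hb.
have h1 := (goodL hG) (-1) u u a b ha hb.
have h2 := (goodL hG) (-1) u u b a hb ha.
rewrite rmorphN1 scaleN1r addNr mulN1r in h1 h2.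
have := (goodD hG) _ _ h1; have := (goodD hG) _ _ h2; rewrite pn0.
rewrite mulN1r => h3 h4; lra.
Qed.


Lemma good_G0 : good G0.
Proof.
split => //.
- move=> r _ _ _ _ [r1 [-> ->]] [r2 [-> ->]]; exists (r * r1 + r2).
  congr pair; last by ring.
  by rewrite scalerA -rmorphM -scalerDl -rmorphD.
- move=> _ _ [r [-> ->]]; rewrite pnZ; apply: ler_wpM2r; first exact: pn_ge0.
  exact: ler_norm.
Qed.

Lemma extend M : good M -> forall x1, ~ (exists a, M (x1, a)) ->
  exists M', good M' /\ M `<` M'.
Proof.
move=> hM x1 nx1.
pose L := [set l | exists y s, M (y, s) /\ l = s - pn (y - x1)].
have bnd : forall y s z u, M (y, s) -> M (z, u) -> s - pn (y - x1) <= pn (z + x1) - u.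
  move=> y s z u hy hz.
  have hyz := goodL hM 1 y z s u hy hz; rewrite rmorph1 scale1r mul1r in hyz.
  have := goodD hM _ _ hyz.
  have := pnD (y - x1) (z + x1).
  rewrite (_ : y - x1 + (z + x1) = y + z); last by rewrite addrACA addNr addr0.
  lra.
have L0 : L !=set0.
  by exists (0 - pn (0 - x1)); exists 0, 0; split => //; exact: good00 hM.
have Lub : ubound L (pn (0 + x1) - 0).
  by move=> l [y [s [hy ->]]]; exact: bnd _ _ _ _ hy (good00 hM).
pose c := sup L.
have ci : forall y s, M (y, s) -> s - pn (y - x1) <= c.
  move=> y s hy; apply: ub_le_sup; first by exists (pn (0 + x1) - 0).
  by exists y, s.
have cs : forall z u, M (z, u) -> c <= pn (z + x1) - u.
  move=> z u hz; apply: ge_sup => // l [y [s [hy ->]]]; exact: bnd _ _ _ _ hy hz.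
pose M' := [set w | exists t y s, M (y, s) /\ w = (y + t%:C *: x1, s + t * c)].
have MM' : M `<=` M'.
  move=> [y s] hy; exists 0, y, s; split => //.
  by rewrite rmorph0 scale0r addr0 mul0r addr0.
exists M'; split; last first.
  split => // sub; apply: nx1; exists c; apply: sub.
  exists 1, 0, 0; split; first exact: good00 hM.
  by rewrite rmorph1 scale1r add0r mul1r add0r.
split.
- move=> r _ _ _ _ [t1 [y1 [s1 [h1 [-> ->]]]]] [t2 [y2 [s2 [h2 [-> ->]]]]].
  exists (r * t1 + t2), (r%:C *: y1 + y2), (r * s1 + s2); split.
    exact: goodL hM _ _ _ _ _ h1 h2.
  congr pair; last by ring.
  by rewrite scalerDr scalerA -rmorphM rmorphD scalerDl addrACA.
- move=> _ _ [t [y [s [hy [-> ->]]]]].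
  case: (ltgtP t 0) => [tn|tp|->].
  + have hy' := goodZ hM ((- t)^-1) _ _ hy.
    have := ci _ _ hy'.
    have e : y + t%:C *: x1 = (- t)%:C *: ((- t)^-1%:C *: y - x1).
      rewrite scalerBr scalerA -rmorphM mulfV ?oppr_eq0 ?ltr0_neq0 //.
      by rewrite rmorph1 scale1r rmorphN scaleNr opprK.
    rewrite e pnZ gtr0_norm ?oppr_gt0 // => hc.
    have tp : 0 < - t by rewrite oppr_gt0.
    have := ler_wpM2l (ltW tp) hc.
    rewrite mulrBr mulrA mulfV ?gt_eqF // mul1r.
    lra.
  + have hy' := goodZ hM (t^-1) _ _ hy.
    have := cs _ _ hy'.
    have e : y + t%:C *: x1 = t%:C *: (t^-1%:C *: y + x1).
      by rewrite scalerDr scalerA -rmorphM mulfV ?gt_eqF // rmorph1 scale1r.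
    rewrite e pnZ gtr0_norm // => hc.
    have := ler_wpM2l (ltW tp) hc.
    rewrite mulrBr mulrA mulfV ?gt_eqF // mul1r.
    lra.
  + rewrite rmorph0 scale0r addr0 mul0r addr0; exact: goodD hM _ _ hy.
- exact: subset_trans (good0 hM) MM'.
Qed.


Lemma chain_ok (F : set (set (X * R))) :
  F `<=` (fun G => G = set0 \/ good G) -> total_on F subset ->
  (fun G => G = set0 \/ good G) (\bigcup_(G in F) G).
Proof.
move=> FP Ftot.
case: (pselect (exists G, F G /\ G !=set0)) => [[G1 [FG1 [w1 G1w1]]] | none].
  have gof : forall G w, F G -> G w -> good G.
    by move=> G w FG Gw; case: (FP _ FG) => // e; rewrite e in Gw.
  have gG1 := gof _ _ FG1 G1w1.
  right; split.
  - move=> r u v a b [A FA hA] [B FB hB]; case: (Ftot A B FA FB) => sub.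
      exists B => //; apply: (goodL (gof _ _ FB hB)) => //; exact: sub _ hA.
    exists A => //; apply: (goodL (gof _ _ FA hA)) => //; exact: sub _ hB.
  - by move=> u a [A FA hA]; exact: goodD (gof _ _ FA hA) _ _ hA.
  - by move=> w hw; exists G1 => //; exact: good0 gG1 _ hw.
left; apply/seteqP; split => w // [A FA hA]; apply: none; exists A; split => //.
by exists w.
Qed.

Lemma hb_exists : exists g : X -> R,
  [/\ forall r u v, g (r%:C *: u + v) = r * g u + g v,
      forall x, g x <= pn x & g x0 = pn x0].
Proof.
have [M [PM maxM]] := Zorn_bigcup chain_ok.
have G0x0 : G0 (x0, pn x0) by exists 1; rewrite rmorph1 scale1r mul1r.
have gM : good M.
  case: PM => // e; exfalso; apply: (maxM G0); last by right; exact: good_G0.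
  rewrite e; split => // sub; exact: sub _ G0x0.
have tot : forall x, exists a, M (x, a).
  move=> x; apply: contrapT => nx.
  have [M' [gM' lt]] := @extend M gM x nx.
  exact: maxM M' lt (or_intror gM').
have [g hg] := choice tot.
exists g; split.
- move=> r u v; apply: good_fun gM _ _ _ (hg _) (goodL gM _ _ _ _ _ (hg u) (hg v)).
- by move=> x; exact: goodD gM _ _ (hg x).
- by apply: (good_fun gM _ _ _ (hg x0)); apply: (good0 gM).
Qed.

End HBz.
Arguments hb_exists {R X x0}.

Section Op.
Variables (R : realType) (X : normedModType (R[i])%C).

Lemma nonzero_vec : infinite_dim X -> exists x0 : X, x0 != 0.
Proof.
move=> hinf; have [x hx] := hinf [::]; exists x; apply/eqP => e; apply: hx.
by exists (fun _ => 0); rewrite e big_ord0.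
Qed.

Lemma cfun_lin (g : X -> R) :
  (forall r u v, g (r%:C *: u + v) = r * g u + g v) ->
  forall a u v, (g (a *: u + v))%:C - 'i * (g ('i *: (a *: u + v)))%:C =
    a * ((g u)%:C - 'i * (g ('i *: u))%:C) + ((g v)%:C - 'i * (g ('i *: v))%:C).
Proof.
move=> glin.
have g0 : g 0 = 0.
  have := glin 1 0 0; rewrite scaler0 addr0 mul1r => h; lra.
have gA : forall a u v, g (a *: u + v) = complex.Re a * g u + complex.Im a * g ('i *: u) + g v.
  move=> a u v.
  have ea : a *: u = (complex.Re a)%:C *: u + (complex.Im a)%:C *: ('i *: u).
    by rewrite scalerA (mulrC _ 'i) -scalerDl -complexE.
  by rewrite ea -addrA !glin addrA.
have gii : forall u, g ('i *: ('i *: u)) = - g u.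
  move=> u; rewrite scalerA -expr2 sqr_i -(rmorphN1 (real_complex R)) -[_ *: u]addr0 glin g0 addr0.
  by rewrite mulN1r.
move=> a u v.
have e : 'i *: (a *: u + v) = a *: ('i *: u) + 'i *: v.
  by rewrite scalerDr !scalerA mulrC.
rewrite e !gA gii; clear e.
case: a => al be /=.
apply/eqP; rewrite eq_complex /=; apply/andP; split; apply/eqP; ring.
Qed.


Lemma exists_nonscalar (A : set (X -> X)) : infinite_dim X ->
  standard_operator_algebra A ->
  exists N, A N /\ forall l : R[i], ~ (forall x, N x = l *: x).
Proof.
move=> hinf [_ [hfr _]].
have [x0 hx0] := nonzero_vec hinf.
have [g [glin gle gx0]] := @hb_exists R X x0.
pose f x := (g x)%:C - 'i * (g ('i *: x))%:C.
have flin : forall a u v, f (a *: u + v) = a * f u + f v.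
  by move=> a u v; rewrite /f cfun_lin.
have gN : forall u, g (- u) = - g u.
  move=> u; have := glin (-1) u 0; rewrite rmorphN1 scaleN1r addr0 mulN1r.
  have := glin 1 0 0; rewrite scaler0 addr0 mul1r => h; have g0 : g 0 = 0 by lra.
  by rewrite g0 addr0.
have gabs : forall u, `|g u| <= pn u.
  move=> u; rewrite ler_norml gle andbT -pnN lerNl -gN; exact: gle.
have fB : forall u, `|f u| <= 2 * `|u|.
  move=> u; rewrite /f (le_trans (ler_normB _ _)) //.
  rewrite normrM normci mul1r !normcR pnE mulr2n mulrDl mul1r.
  by apply: lerD; rewrite lecR // -(pni u).
pose T x := f x *: x0.
have Tlin : lin_op T.
  by move=> a u v; rewrite /T flin scalerDl scalerA.
have TB : forall x z, `|T x - T z| <= 2 * `|x0| * `|x - z|.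
  move=> x z; rewrite /T -scalerBl.
  have -> : f x - f z = f (x - z).
    by rewrite addrC -[- z]scaleN1r [x + _]addrC flin mulN1r.
  by rewrite normrZ mulrAC; apply: ler_wpM2r => //; exact: fB.
have Tc : continuous T.
  move=> x; apply/(@cvgrPdist_lt _ _ _ (nbhs x)) => e e_gt0.
  have k0 : 0 < 2 * `|x0| + 1 by rewrite ltr_wpDl // mulr_ge0.
  near=> z.
  rewrite (le_lt_trans (TB x z)) //.
  have h1 : 2 * `|x0| <= 2 * `|x0| + 1 by rewrite lerDl.
  rewrite (le_lt_trans (ler_wpM2r (normr_ge0 (x - z)) h1)) //.
  rewrite -ltr_pdivlMl //.
  by near: z; apply: cvgr_dist_lt => //; rewrite mulr_gt0 // invr_gt0.
have AT : A T.
  apply: hfr; first by split.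
  by exists [:: x0] => x; exists (fun _ => f x); rewrite big_ord1.
exists T; split => // l hl.
have fx0 : f x0 != 0.
  apply/eqP => h; have := congr1 (@complex.Re R) h; rewrite /f /= gx0.
  have := pn_gt0 _ hx0; lra.
have l0 : l != 0.
  apply/eqP => e; have := hl x0; rewrite e scale0r /T => /eqP.
  by rewrite scaler_eq0 (negbTE fx0) (negbTE hx0).
have [x hx] := hinf [:: x0]; apply: hx.
exists (fun _ => l^-1 * f x); rewrite big_ord1 /= -scalerA -/(T x) hl scalerA.
by rewrite mulVf // scale1r.
Unshelve. all: by end_near.
Qed.

End Op.
Arguments nonzero_vec {R X}. Arguments exists_nonscalar {R X A}.
Close Scope complex_scope.

Theorem lemma2p4 (R : realType)
  (X Y : completeNormedModType (R[i])%C)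
  (A : set (X -> X)) (B : set (Y -> Y))
  (phi : (X -> X) -> (Y -> Y)) :
  infinite_dim X -> infinite_dim Y ->
  standard_operator_algebra A -> standard_operator_algebra B ->
  (forall T, A T -> B (phi T)) ->
  {in A &, injective phi} ->
  (forall S, B S -> exists2 T, A T & phi T = S) ->
  (forall T : opmx2 X, in_alg2 A T ->
     (quadratic2 T <-> quadratic2 (phi2 phi T))) ->
  phi id = id ->
  forall P Q, A P -> A Q -> idempotent_opr P -> idempotent_opr Q ->
    ((P \o Q = (fun _ => 0) /\ Q \o P = (fun _ => 0)) <->
     (phi P \o phi Q = (fun _ => 0) /\ phi Q \o phi P = (fun _ => 0))).
Proof.
move=> infX infY sA sB AB _ _ H2 phiI P Q AP AQ idP idQ.
have linA : forall T, A T -> lin T.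
  by case: sA => [[hb _ _ _ _] _] T AT; exact: (proj1 (hb T AT)).
have linBB : forall S, B S -> lin S.
  by case: sB => [[hb _ _ _ _] _] T AT; exact: (proj1 (hb T AT)).
have Aid : A id by case: sA => [[_ h _ _ _] _].
have Asc : forall l, A (fun x => l *: x).
  by case: sA => [[_ hid _ hsc _] _] l; exact: (hsc l id hid).
have Hm : forall E F G H, A E -> A F -> A G -> A H ->
    quadratic2 (mk2 E F G H) <-> quadratic2 (mk2 (phi E) (phi F) (phi G) (phi H)).
  move=> E F G H AE AF AG AH.
  have e : phi2 phi (mk2 E F G H) = mk2 (phi E) (phi F) (phi G) (phi H).
    apply: funext => i; apply: funext => j; rewrite /phi2 /mk2.
    by case: (i == ord0); case: (j == ord0).
  rewrite -e; apply: H2 => i j; rewrite /mk2.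
  by case: (i == ord0); case: (j == ord0).
have [y0 hy0] := nonzero_vec infY.
have [x0 hx0] := nonzero_vec infX.
have S1 : forall Z, A Z -> (exists c, forall y, phi Z y = c *: y) ->
    exists l, forall x, Z x = l *: x.
  move=> Z AZ [c hc]; apply: quad_scal; apply/(Hm Z id id Z AZ Aid Aid AZ).
  rewrite phiI (_ : phi Z = (fun y => c *: y)); last exact: funext.
  exact: scal_quad.
have S2 : forall l, exists c, forall y, phi (fun x => l *: x) y = c *: y.
  move=> l; apply: quad_scal.
  have := Hm _ _ _ _ (Asc l) Aid Aid (Asc l); rewrite phiI => h; apply/h.
  exact: scal_quad.
have phi0 : forall y, phi (fun x => 0 *: x) y = 0.
  have [N [AN nN]] := exists_nonscalar infX sA.
  have [c hc] := S2 0.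
  have q : quadratic2 (mk2 id (fun x => 0 *: x) N id).
    apply: orth_quad.
    - by move=> a u v; rewrite !scale0r scaler0 addr0.
    - exact: linA.
    - by move=> x; rewrite scale0r.
    - by move=> x; rewrite scale0r (lin0 (linA N AN)).
  move/(Hm _ _ _ _ Aid (Asc 0) AN Aid): q; rewrite phiI => q'.
  have [t ht] := quad_orth _ _ q'.
  case: (eqVneq c 0) => [c0|cn0]; first by move=> y; rewrite hc c0 scale0r.
  exfalso.
  have hN : exists c, forall y, phi N y = c *: y.
    exists (t / c) => y; have [h1 _] := ht y; rewrite hc in h1.
    by rewrite mulrC -scalerA -h1 scalerA mulVf // scale1r.
  by have [l hl] := S1 N AN hN; exact: nN l hl.
have pw : forall (F G : X -> X) x, F = G -> F x = G x by move=> F G x ->.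
have pwY : forall (F G : Y -> Y) y, F = G -> F y = G y by move=> F G y ->.
split.
- move=> [hPQ hQP].
  have q := orth_quad _ _ (linA P AP) (linA Q AQ) (fun x => pw _ _ x hPQ) (fun x => pw _ _ x hQP).
  move/(Hm _ _ _ _ Aid AP AQ Aid): q; rewrite phiI => q'.
  have [t ht] := quad_orth _ _ q'.
  case: (eqVneq t 0) => [t0|tn0].
    by split; apply: funext => y /=; have [h1 h2] := ht y; rewrite ?h1 ?h2 t0 scale0r.
  exfalso.
  have qP := idem_quad _ (fun x => pw _ _ x idP).
  move/(Hm _ _ _ _ AP AP AP AP): qP => qP'.
  have [c hc] := quad_sqc _ (linBB _ (AB _ AP)) qP'.
  have qQ := idem_quad _ (fun x => pw _ _ x idQ).
  move/(Hm _ _ _ _ AQ AQ AQ AQ): qQ => qQ'.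
  have [d hd] := quad_sqc _ (linBB _ (AB _ AQ)) qQ'.
  have [l hl] : exists l, forall x, P x = l *: x.
    apply: S1 => //; exists c => y.
    have := hc (phi Q (t^-1 *: y)).
    by rewrite (proj1 (ht _)) !scalerA mulfV // mulfK // scale1r.
  have [m hm] : exists m, forall x, Q x = m *: x.
    apply: S1 => //; exists d => y.
    have := hd (phi P (t^-1 *: y)).
    by rewrite (proj2 (ht _)) !scalerA mulfV // mulfK // scale1r.
  have := pw _ _ x0 hPQ; rewrite /= hm hl scalerA => /eqP.
  rewrite scaler_eq0 (negbTE hx0) orbF mulf_eq0 => /orP[] /eqP z0.
    have eP : P = (fun x => 0 *: x) by apply: funext => x; rewrite hl z0.
    have [h1 _] := ht y0; move: h1; rewrite eP phi0 => /esym/eqP.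
    by rewrite scaler_eq0 (negbTE tn0) (negbTE hy0).
  have eQ : Q = (fun x => 0 *: x) by apply: funext => x; rewrite hm z0.
  have [_ h2] := ht y0; move: h2; rewrite eQ phi0 => /esym/eqP.
  by rewrite scaler_eq0 (negbTE tn0) (negbTE hy0).
- move=> [h1 h2].
  have q := orth_quad _ _ (linBB _ (AB _ AP)) (linBB _ (AB _ AQ))
    (fun y => pwY _ _ y h1) (fun y => pwY _ _ y h2).
  have q' : quadratic2 (mk2 id P Q id).
    by apply/(Hm _ _ _ _ Aid AP AQ Aid); rewrite phiI.
  have [t ht] := quad_orth _ _ q'.
  case: (eqVneq t 0) => [t0|tn0].
    by split; apply: funext => x /=; have [e1 e2] := ht x; rewrite ?e1 ?e2 t0 scale0r.
  exfalso.
  have eP : P = id.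
    apply: funext => x; have := pw _ _ (Q (t^-1 *: x)) idP; rewrite /=.
    by rewrite (proj1 (ht _)) scalerA mulfV // scale1r.
  have eQ : Q = id.
    apply: funext => x; have := pw _ _ (P (t^-1 *: x)) idQ; rewrite /=.
    by rewrite (proj2 (ht _)) scalerA mulfV // scale1r.
  have := pwY _ _ y0 h1; rewrite eP eQ phiI /= => e.
  by move: hy0; rewrite e eqxx.
Qed.
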